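(* Let $\frac13<q<1$ and let $a>0$. Define the probability distribution $p^{(a)}=(p^{(a)}_k)_{k\in\mathbb{Z}}$ on $\mathbb{Z}$ by $$p^{(a)}_k=f_q(a)^{-1}\Big(1+\frac{k^2}{a^2}\Big)^{\frac{1}{q-1}},\qquad f_q(a)=\sum_{k\in\mathbb{Z}}\Big(1+\frac{k^2}{a^2}\Big)^{\frac{1}{q-1}} .$$ Then $p^{(a)}$ has zero mean and finite variance $\sigma^2=\sum_{k\in\mathbb{Z}}k^2p^{(a)}_k$, and $p^{(a)}$ maximizes the Tsallis entropy $H_q$ over all probability distributions $p$ on $\mathbb{Z}$ satisfying $\sum_{k}k\,p_k=0$ and $\sum_k k^2p_k=\sigma^2$.
   Context: For a probability distribution $p=(p_k)_{k\in\mathbb{Z}}$ on $\mathbb{Z}$ and $q\neq 1$, the Tsallis entropy is $H_q(p)=\frac{1}{q-1}\big(1-\sum_{k\in\mathbb{Z}}p_k^q\big)$. In the paper $a^2=k_BT=1/\beta$ is interpreted as a temperature and $\sum_k k^2 p_k$ as the mean energy $U$. *)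

(* Defs.v *)
From Stdlib Require Import Reals ZArith.
From Coquelicot Require Import Coquelicot.
Open Scope R_scope.

Definition Zsummable (f : Z -> R) : Prop :=
  ex_series (fun n : nat => Rabs (f (Z.of_nat n))) /\
  ex_series (fun n : nat => Rabs (f (- Z.of_nat (S n))%Z)).

Definition Zsum (f : Z -> R) : R :=
  Series (fun n : nat => f (Z.of_nat n)) +
  Series (fun n : nat => f (- Z.of_nat (S n))%Z).

Definition is_prob (p : Z -> R) : Prop :=
  (forall k, 0 <= p k) /\ Zsummable p /\ Zsum p = 1.

Definition powq (x q : R) : R := if Rle_dec x 0 then 0 else Rpower x q.

Definition tsallis (q : R) (p : Z -> R) : R :=
  (1 - Zsum (fun k => powq (p k) q)) / (q - 1).

Definition qweight (q a : R) (k : Z) : R :=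
  Rpower (1 + (IZR k)^2 / a^2) (1 / (q - 1)).

Definition fq (q a : R) : R := Zsum (qweight q a).

Definition pa (q a : R) (k : Z) : R := qweight q a k / fq q a.

Definition mom1 (p : Z -> R) (k : Z) : R := IZR k * p k.
Definition mom2 (p : Z -> R) (k : Z) : R := (IZR k)^2 * p k.

(* Main.v *)
Require Import Defs.
From Stdlib Require Import Reals ZArith Lra Lia.
From Coquelicot Require Import Coquelicot.
Open Scope R_scope.

Lemma ln_le_sub1 x : 0 < x -> ln x <= x - 1.
Proof. intros hx. pose proof (exp_ineq1_le (ln x)). rewrite exp_ln in H; lra. Qed.

Lemma key_tele t n : 0 < t -> 1 <= n ->
  t * exp (-(t+1) * ln (n+1)) <= exp (-t * ln n) - exp (-t * ln (n+1)).
Proof.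
  intros ht hn.
  set (A := exp (-t * ln (n+1))).
  assert (HA : 0 < A) by apply exp_pos.
  assert (E1 : exp (-(t+1) * ln (n+1)) = A / (n+1)).
  { unfold A. replace (-(t+1) * ln (n+1)) with (-t * ln (n+1) + - ln (n+1)) by ring.
    rewrite exp_plus, exp_Ropp, exp_ln by lra. reflexivity. }
  set (d := ln (n+1) - ln n).
  assert (E2 : exp (-t * ln n) = A * exp (t * d)).
  { unfold A, d. rewrite <- exp_plus. f_equal. ring. }
  assert (Hd : 1/(n+1) <= d).
  { unfold d. pose proof (ln_le_sub1 (n/(n+1))).
    rewrite ln_div in H by lra.
    assert (n/(n+1) - 1 = - (1/(n+1))) by (field; lra).
    assert (0 < n/(n+1)) by (apply Rdiv_lt_0_compat; lra). lra. }
  pose proof (exp_ineq1_le (t*d)).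
  rewrite E1, E2.
  assert (t/(n+1) <= t*d).
  { replace (t/(n+1)) with (t * (1/(n+1))) by (field; lra). apply Rmult_le_compat_l; lra. }
  replace (t * (A/(n+1))) with (A * (t/(n+1))) by (field; lra).
  assert (A * (t/(n+1)) <= A * (t*d)) by (apply Rmult_le_compat_l; lra).
  assert (A * (1 + t*d) <= A * exp (t*d)) by (apply Rmult_le_compat_l; lra).
  lra.
Qed.

Lemma ex_series_bounded (c : nat -> R) M :
  (forall n, 0 <= c n) -> (forall n, sum_n c n <= M) -> ex_series c.
Proof.
  intros h0 hM.
  destruct (ex_finite_lim_seq_incr (sum_n c) M) as [l Hl].
  - intros n. rewrite sum_Sn. unfold plus; simpl. pose proof (h0 (S n)). lra.
  - exact hM.
  - exists l. exact Hl.
Qed.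

Lemma pseries s : 1 < s -> ex_series (fun n => exp (-s * ln (INR n + 1))).
Proof.
  intros hs. set (t := s - 1).
  apply ex_series_bounded with (M := 1 + 1/t).
  - intros; apply Rlt_le, exp_pos.
  - assert (H : forall N, sum_n (fun n => exp (-s * ln (INR n + 1))) N
                 <= 1 + 1/t * (1 - exp (-t * ln (INR N + 1)))).
    { induction N.
      + rewrite sum_O. simpl. replace (0+1) with 1 by ring. rewrite ln_1.
        replace (-s*0) with 0 by ring. replace (-t*0) with 0 by ring. rewrite exp_0. lra.
      + rewrite sum_Sn. change (plus ?x ?y) with (x + y).
        pose proof (key_tele t (INR N + 1)) as K.
        rewrite S_INR.
        assert (ht : 0 < t) by (unfold t; lra).
        assert (1 <= INR N + 1) by (pose proof (pos_INR N); lra).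
        specialize (K ht H).
        replace (-(t+1)) with (-s) in K by (unfold t; ring).
        assert (1/t * (t * exp (- s * ln (INR N + 1 + 1))) = exp (- s * ln (INR N + 1 + 1))) by (field; lra).
        assert (0 < 1/t) by (apply Rdiv_lt_0_compat; lra).
        assert (1/t * (t * exp (- s * ln (INR N + 1 + 1))) <= 1/t * (exp (- t * ln (INR N + 1)) - exp (- t * ln (INR N + 1 + 1)))) by (apply Rmult_le_compat_l; lra).
        lra. }
    intros N. specialize (H N). pose proof (exp_pos (-t * ln (INR N + 1))).
    assert (0 < 1/t) by (apply Rdiv_lt_0_compat; unfold t; lra).
    assert (1/t * (1 - exp (- t * ln (INR N + 1))) <= 1/t * 1) by (apply Rmult_le_compat_l; lra).
    lra.
Qed.

Lemma Zsummable_ex f : Zsummable f ->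
  ex_series (fun n => f (Z.of_nat n)) /\ ex_series (fun n => f (- Z.of_nat (S n))%Z).
Proof. intros [h1 h2]; split; apply ex_series_Rabs; assumption. Qed.

Lemma Zsummable_nonneg f : (forall k, 0 <= f k) ->
  ex_series (fun n => f (Z.of_nat n)) -> ex_series (fun n => f (- Z.of_nat (S n))%Z) ->
  Zsummable f.
Proof.
  intros h0 h1 h2; split.
  - eapply ex_series_ext; [|exact h1]. intros n; simpl. rewrite Rabs_pos_eq; auto.
  - eapply ex_series_ext; [|exact h2]. intros n; simpl. rewrite Rabs_pos_eq; auto.
Qed.

Lemma ex_series_lin (u v : nat -> R) al be :
  ex_series u -> ex_series v -> ex_series (fun n => al * u n + be * v n).
Proof.
  intros hu hv.
  apply (ex_series_plus (fun n => al * u n) (fun n => be * v n));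
  apply (ex_series_scal_l (V := R_NormedModule)); assumption.
Qed.

Lemma Zsummable_lin f g al be : Zsummable f -> Zsummable g ->
  Zsummable (fun k => al * f k + be * g k).
Proof.
  intros [f1 f2] [g1 g2]; split.
  - apply (ex_series_le (V := R_CompleteNormedModule)) with
      (b := fun n => Rabs al * Rabs (f (Z.of_nat n)) + Rabs be * Rabs (g (Z.of_nat n))).
    + intros n. change norm with Rabs. rewrite Rabs_Rabsolu.
      eapply Rle_trans; [apply Rabs_triang|]. rewrite !Rabs_mult; lra.
    + apply ex_series_lin; assumption.
  - apply (ex_series_le (V := R_CompleteNormedModule)) with
      (b := fun n => Rabs al * Rabs (f (- Z.of_nat (S n))%Z) + Rabs be * Rabs (g (- Z.of_nat (S n))%Z)).
    + intros n. change norm with Rabs. rewrite Rabs_Rabsolu.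
      eapply Rle_trans; [apply Rabs_triang|]. rewrite !Rabs_mult; lra.
    + apply ex_series_lin; assumption.
Qed.

Lemma Series_lin (u v : nat -> R) al be :
  ex_series u -> ex_series v -> Series (fun n => al * u n + be * v n) = al * Series u + be * Series v.
Proof.
  intros hu hv.
  rewrite (Series_plus (fun n => al * u n) (fun n => be * v n)).
  - rewrite !Series_scal_l; reflexivity.
  - apply (ex_series_scal_l (V := R_NormedModule)); assumption.
  - apply (ex_series_scal_l (V := R_NormedModule)); assumption.
Qed.

Lemma Zsum_lin f g al be : Zsummable f -> Zsummable g ->
  Zsum (fun k => al * f k + be * g k) = al * Zsum f + be * Zsum g.
Proof.
  intros hf hg. apply Zsummable_ex in hf as [f1 f2]. apply Zsummable_ex in hg as [g1 g2].
  unfold Zsum.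
  rewrite (Series_lin (fun n => f (Z.of_nat n)) (fun n => g (Z.of_nat n))) by assumption.
  rewrite (Series_lin (fun n => f (- Z.of_nat (S n))%Z) (fun n => g (- Z.of_nat (S n))%Z)) by assumption.
  ring.
Qed.

Lemma Zsum_ext f g : (forall k, f k = g k) -> Zsum f = Zsum g.
Proof. intros h; unfold Zsum; f_equal; apply Series_ext; intros; apply h. Qed.

Lemma Zsummable_ext f g : (forall k, f k = g k) -> Zsummable f -> Zsummable g.
Proof. intros h [h1 h2]; split.
  - apply (ex_series_ext (fun n => Rabs (f (Z.of_nat n)))); auto. intros n; rewrite h; reflexivity.
  - apply (ex_series_ext (fun n => Rabs (f (- Z.of_nat (S n))%Z))); auto. intros n; rewrite h; reflexivity.
Qed.

Lemma Zsum_le f g : (forall k, 0 <= f k <= g k) -> Zsummable g -> Zsum f <= Zsum g.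
Proof.
  intros h hg. apply Zsummable_ex in hg as [g1 g2]. unfold Zsum.
  apply Rplus_le_compat; apply Series_le; auto.
Qed.

Lemma Zsummable_le f g : (forall k, 0 <= f k <= g k) -> Zsummable g -> Zsummable f.
Proof.
  intros h [g1 g2]; split.
  - apply (ex_series_le (V := R_CompleteNormedModule)) with (b := fun n => Rabs (g (Z.of_nat n))); auto.
    intros n. change norm with Rabs. rewrite Rabs_Rabsolu. specialize (h (Z.of_nat n)).
    rewrite !Rabs_pos_eq; lra.
  - apply (ex_series_le (V := R_CompleteNormedModule)) with (b := fun n => Rabs (g (- Z.of_nat (S n))%Z)); auto.
    intros n. change norm with Rabs. rewrite Rabs_Rabsolu. specialize (h (- Z.of_nat (S n))%Z).
    rewrite !Rabs_pos_eq; lra.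
Qed.

Lemma Series_nonneg u : (forall n, 0 <= u n) -> ex_series u -> 0 <= Series u.
Proof.
  intros h hu.
  assert (Series (fun n => 0 * u n) <= Series u) by (apply Series_le; auto; intros; split; [lra|]; rewrite Rmult_0_l; auto).
  rewrite Series_scal_l in H. lra.
Qed.

Lemma exp_le_mono x y : x <= y -> exp x <= exp y.
Proof. intros h; destruct (Req_dec x y) as [->|]; [lra|]. apply Rlt_le, exp_increasing; lra. Qed.

Lemma L2 a g : 0 < a -> g < -1/2 -> ex_series (fun n => Rpower (1 + (INR n)^2/a^2) g).
Proof.
  intros ha hg. set (K := 2*(1+a^2)). set (s := -2*g).
  apply (ex_series_le (V := R_CompleteNormedModule)) with
    (b := fun n => exp (-g * ln K) * exp (-s * ln (INR n + 1))).
  - intros n. change norm with Rabs. unfold Rpower.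
    rewrite Rabs_pos_eq by (apply Rlt_le, exp_pos).
    rewrite <- exp_plus. apply exp_le_mono.
    pose proof (pos_INR n) as hn.
    assert (hK : 0 < K) by (unfold K; nra).
    assert (hB : (INR n + 1)^2 / K <= 1 + INR n ^2 / a^2).
    { unfold K. apply Rmult_le_reg_r with (r := 2*(1+a^2) * a^2). nra.
      field_simplify; [|nra|nra]. nra. }
    assert (h1 : 0 < (INR n + 1)^2 / K) by (apply Rdiv_lt_0_compat; nra).
    pose proof (ln_le _ _ h1 hB) as hl.
    rewrite ln_div in hl by (nra || lra). rewrite ln_pow in hl by lra.
    simpl INR in hl. unfold s. nra.
  - apply (ex_series_scal_l (V := R_NormedModule) (exp (-g * ln K)) (fun n => exp (-s * ln (INR n + 1)))).
    apply pseries. unfold s; lra.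
Qed.

Lemma Zsummable_bound (F : R -> R) C a g : 0 < a -> g < -1/2 ->
  (forall x, Rabs (F x) <= C * Rpower (1 + x^2/a^2) g) -> Zsummable (fun k => F (IZR k)).
Proof.
  intros ha hg hb. pose proof (L2 a g ha hg) as hs.
  assert (hs' : ex_series (fun n => C * Rpower (1 + (INR n)^2/a^2) g))
    by (apply (ex_series_scal_l (V := R_NormedModule) C (fun n => Rpower (1 + (INR n)^2/a^2) g)); exact hs).
  split.
  - apply (ex_series_le (V := R_CompleteNormedModule)) with (b := fun n => C * Rpower (1 + (INR n)^2/a^2) g); auto.
    intros n. change norm with Rabs. rewrite Rabs_Rabsolu, <- INR_IZR_INZ. apply hb.
  - apply (ex_series_le (V := R_CompleteNormedModule)) with (b := fun n => C * Rpower (1 + (INR (S n))^2/a^2) g).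
    + intros n. change norm with Rabs. rewrite Rabs_Rabsolu, opp_IZR, <- INR_IZR_INZ.
      replace ((INR (S n))^2) with ((- INR (S n))^2) by ring. apply hb.
    + apply (ex_series_incr_1 (fun n => C * Rpower (1 + (INR n)^2/a^2) g)). exact hs'.
Qed.
Lemma bern t q : 0 < q < 1 -> 0 < t -> Rpower t q <= 1 + q * (t - 1).
Proof.
  intros [hq0 hq1] ht. unfold Rpower. set (L := ln t). set (E := exp (q * L)).
  assert (hE : 0 < E) by apply exp_pos.
  assert (h1 : t = E * exp ((1-q) * L)).
  { unfold E, L. rewrite <- exp_plus. replace (q * ln t + (1 - q) * ln t) with (ln t) by ring.
    rewrite exp_ln; auto. }
  assert (h2 : 1 = E * exp (- (q * L))).
  { unfold E. rewrite <- exp_plus. replace (q * L + - (q * L)) with 0 by ring. rewrite exp_0; auto. }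
  pose proof (exp_ineq1_le ((1-q)*L)) as i1.
  pose proof (exp_ineq1_le (-(q*L))) as i2.
  assert (E * (1 + (1-q)*L) <= t) by (rewrite h1; apply Rmult_le_compat_l; lra).
  assert (E * (1 + - (q*L)) <= 1) by (rewrite h2 at 2; apply Rmult_le_compat_l; lra).
  fold E. nra.
Qed.

Lemma tangent x y q : 0 < q < 1 -> 0 <= x -> 0 < y ->
  powq x q <= (1-q) * Rpower y q + q * (Rpower y q / y) * x.
Proof.
  intros hq hx hy. pose proof (exp_pos (q * ln y)) as hY. fold (Rpower y q) in hY.
  unfold powq. destruct (Rle_dec x 0).
  - assert (x = 0) by lra. subst. nra.
  - assert (hxy : x = (x/y) * y) by (field; lra).
    rewrite hxy at 1. rewrite <- Rpower_mult_distr by (try apply Rdiv_lt_0_compat; lra).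
    pose proof (bern (x/y) q hq ltac:(apply Rdiv_lt_0_compat; lra)).
    assert (Rpower (x/y) q * Rpower y q <= (1 + q * (x/y - 1)) * Rpower y q)
      by (apply Rmult_le_compat_r; lra).
    replace ((1 + q * (x/y - 1)) * Rpower y q) with ((1-q) * Rpower y q + q * (Rpower y q / y) * x) in H0
      by (field; lra).
    exact H0.
Qed.

Theorem theorem1 (q a : R) (hq1 : 1/3 < q) (hq2 : q < 1) (ha : 0 < a) :
  is_prob (pa q a) /\
  Zsummable (mom1 (pa q a)) /\ Zsum (mom1 (pa q a)) = 0 /\
  Zsummable (mom2 (pa q a)) /\
  (forall p : Z -> R,
     is_prob p ->
     Zsummable (mom1 p) -> Zsum (mom1 p) = 0 ->
     Zsummable (mom2 p) -> Zsum (mom2 p) = Zsum (mom2 (pa q a)) ->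
     tsallis q p <= tsallis q (pa q a)).
Proof.
  set (e := 1/(q-1)).
  set (F0 := fun x => Rpower (1 + x^2/a^2) e).
  assert (hF0 : forall x, 0 < F0 x) by (intros; apply exp_pos).
  assert (hB1 : forall x, 1 <= 1 + x^2/a^2).
  { intros x. assert (0 <= x^2/a^2) by (apply Rmult_le_pos; [nra|apply Rlt_le, Rinv_0_lt_compat; nra]). lra. }
  assert (hFg : forall x, Rpower (1 + x^2/a^2) (e+1) = (1 + x^2/a^2) * F0 x).
  { intros x. unfold F0. rewrite Rpower_plus, Rpower_1 by (specialize (hB1 x); lra). ring. }
  assert (he : e + 1 < -1/2).
  { unfold e. assert (1/(q-1) = - (1/(1-q))) by (field; lra).
    assert (1/(1-q) > 3/2).
    { apply Rmult_gt_reg_l with (r := 1-q); [lra|]. field_simplify; lra. }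
    lra. }
  assert (hw : Zsummable (qweight q a)).
  { apply (Zsummable_bound F0 1 a (e+1) ha he). intros x. rewrite hFg.
    rewrite Rabs_pos_eq by (apply Rlt_le, hF0). specialize (hB1 x); specialize (hF0 x). nra. }
  assert (hwpos : forall k, 0 < qweight q a k) by (intros; apply hF0).
  set (Zf := fq q a).
  assert (hZ : 0 < Zf).
  { unfold Zf, fq. apply Zsummable_ex in hw as [w1 w2]. unfold Zsum.
    rewrite Series_incr_1 by exact w1.
    pose proof (hwpos (Z.of_nat 0)).
    assert (0 <= Series (fun k => qweight q a (Z.of_nat (S k)))).
    { apply Series_nonneg. intros; apply Rlt_le, hwpos. apply (ex_series_incr_1 (fun n => qweight q a (Z.of_nat n))); auto. }
    assert (0 <= Series (fun n => qweight q a (- Z.of_nat (S n))%Z)).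
    { apply Series_nonneg; auto. intros; apply Rlt_le, hwpos. }
    lra. }
  set (P := pa q a).
  assert (hPpos : forall k, 0 < P k) by (intros; apply Rdiv_lt_0_compat; auto).
  assert (hPs : Zsummable P).
  { apply (Zsummable_bound (fun x => F0 x / Zf) (/Zf) a (e+1) ha he). intros x. rewrite hFg.
    rewrite Rabs_pos_eq by (apply Rlt_le, Rdiv_lt_0_compat; auto).
    specialize (hB1 x); specialize (hF0 x). unfold Rdiv. rewrite Rmult_comm.
    apply Rmult_le_compat_l; [apply Rlt_le, Rinv_0_lt_compat; auto|]. nra. }
  assert (hm1s : Zsummable (mom1 P)).
  { apply (Zsummable_bound (fun x => x * (F0 x / Zf)) ((1+a^2)/Zf) a (e+1) ha he). intros x. rewrite hFg.
    specialize (hB1 x); specialize (hF0 x).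
    rewrite Rabs_mult, (Rabs_pos_eq (F0 x / Zf)) by (apply Rlt_le, Rdiv_lt_0_compat; auto).
    assert (Rabs x <= (1+a^2) * (1 + x^2/a^2)).
    { assert (Rabs x <= 1 + x^2) by (destruct (Rabs_pos x); pose proof (pow2_abs x); nra).
      assert ((1+a^2) * (1 + x^2/a^2) = 1 + x^2 + a^2 + x^2/a^2) by (field; lra).
      assert (0 <= x^2/a^2) by lra. nra. }
    assert (0 < F0 x / Zf) by (apply Rdiv_lt_0_compat; auto).
    replace ((1 + a ^ 2) / Zf * ((1 + x ^ 2 / a ^ 2) * F0 x)) with ((1 + a ^ 2) * (1 + x ^ 2 / a ^ 2) * (F0 x / Zf)) by (field; lra).
    apply Rmult_le_compat_r; lra. }
  assert (hm2s : Zsummable (mom2 P)).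
  { apply (Zsummable_bound (fun x => x^2 * (F0 x / Zf)) (a^2/Zf) a (e+1) ha he). intros x. rewrite hFg.
    specialize (hB1 x); specialize (hF0 x).
    rewrite Rabs_pos_eq by (apply Rmult_le_pos; [nra|apply Rlt_le, Rdiv_lt_0_compat; auto]).
    assert (x^2 <= a^2 * (1 + x^2/a^2)).
    { assert (a^2*(1+x^2/a^2) = a^2 + x^2) by (field; lra). nra. }
    assert (0 < F0 x / Zf) by (apply Rdiv_lt_0_compat; auto).
    replace (a^2 / Zf * ((1 + x ^ 2 / a ^ 2) * F0 x)) with (a^2 * (1 + x ^ 2 / a ^ 2) * (F0 x / Zf)) by (field; lra).
    apply Rmult_le_compat_r; lra. }
  assert (hP1 : Zsum P = 1).
  { rewrite (Zsum_ext P (fun k => /Zf * qweight q a k + 0 * qweight q a k))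
      by (intros; unfold P, pa; fold Zf; field; lra).
    rewrite Zsum_lin by auto. change (Zsum (qweight q a)) with Zf. field. lra. }
  assert (hsym : forall n, P (- Z.of_nat n)%Z = P (Z.of_nat n)).
  { intros n. unfold P, pa, qweight. rewrite opp_IZR. f_equal. f_equal. f_equal. f_equal. ring. }
  assert (hm1 : Zsum (mom1 P) = 0).
  { unfold Zsum, mom1.
    rewrite Series_incr_1_aux by (simpl; ring).
    rewrite (Series_ext (fun n => IZR (- Z.of_nat (S n)) * P (- Z.of_nat (S n))%Z)
               (fun n => - (IZR (Z.of_nat (S n)) * P (Z.of_nat (S n))))).
    - rewrite Series_opp. ring.
    - intros n. rewrite hsym, opp_IZR. ring. }
  split; [split; [intros; apply Rlt_le, hPpos| split; auto]|].
  split; [auto|]. split; [auto|]. split; [auto|].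
  intros p [hp0 [hps hp1]] _ _ hp2s hp2.
  fold P in hp2 |- *.
  set (C := Rpower Zf (1-q)).
  set (I := fun (r : Z -> R) k => 1 * r k + /a^2 * mom2 r k).
  assert (hPq' : forall k, Rpower (P k) q / P k = C * (1 + (IZR k)^2/a^2)).
  { intros k. specialize (hPpos k). specialize (hB1 (IZR k)).
    assert (Rpower (P k) q = Rpower (P k) (q-1) * P k).
    { replace q with ((q-1)+1) at 1 by ring. rewrite Rpower_plus, Rpower_1; auto. }
    rewrite H. unfold Rdiv at 1. rewrite Rmult_assoc, Rinv_r, Rmult_1_r by lra.
    unfold P, pa, Rdiv. fold Zf. rewrite <- Rpower_mult_distr by (auto; apply Rinv_0_lt_compat; auto).
    unfold qweight. rewrite Rpower_mult.
    replace (1/(q-1) * (q-1)) with 1 by (field; lra). rewrite Rpower_1 by lra.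
    unfold C, Rpower. rewrite ln_Rinv by auto. rewrite Rmult_comm. f_equal. f_equal. ring. }
  assert (hPq : forall k, powq (P k) q = C * I P k + 0 * I P k).
  { intros k. unfold powq. destruct (Rle_dec (P k) 0) as [h|h]; [specialize (hPpos k); lra|].
    specialize (hPq' k). specialize (hPpos k).
    assert (Rpower (P k) q = C * (1 + (IZR k)^2/a^2) * P k).
    { rewrite <- hPq'. field. lra. }
    rewrite H. unfold I, mom2. field. lra. }
  assert (hIP : Zsummable (I P)) by (apply Zsummable_lin; auto).
  assert (hIp : Zsummable (I p)) by (apply Zsummable_lin; auto).
  assert (hSPs : Zsummable (fun k => powq (P k) q)).
  { apply (Zsummable_ext (fun k => C * I P k + 0 * I P k)); [intros; rewrite hPq; auto|].
    apply Zsummable_lin; auto. }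
  assert (hSP : Zsum (fun k => powq (P k) q) = C * (1 + /a^2 * Zsum (mom2 P))).
  { rewrite (Zsum_ext _ _ hPq), Zsum_lin by auto. unfold I. rewrite Zsum_lin by auto.
    rewrite hP1. ring. }
  assert (hle : Zsum (fun k => powq (p k) q) <=
                Zsum (fun k => (1-q) * powq (P k) q + (q*C) * I p k)).
  { apply Zsum_le; [|apply Zsummable_lin; auto].
    intros k. split.
    - unfold powq. destruct (Rle_dec (p k) 0); [lra|]. apply Rlt_le, exp_pos.
    - pose proof (tangent (p k) (P k) q ltac:(lra) (hp0 k) (hPpos k)) as T.
      rewrite hPq' in T.
      assert (powq (P k) q = Rpower (P k) q) as ->.
      { unfold powq. destruct (Rle_dec (P k) 0); [specialize (hPpos k); lra|auto]. }
      unfold I, mom2. replace ((1 - q) * Rpower (P k) q + q * C * (1 * p k + / a ^ 2 * (IZR k ^ 2 * p k)))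
        with ((1 - q) * Rpower (P k) q + q * (C * (1 + IZR k ^ 2 / a ^ 2)) * p k) by (field; lra).
      exact T. }
  rewrite Zsum_lin in hle by auto.
  rewrite hSP in hle. unfold I in hle. rewrite Zsum_lin in hle by auto.
  rewrite hp1, hp2 in hle.
  unfold tsallis. rewrite hSP.
  set (Sp := Zsum (fun k => powq (p k) q)) in *.
  set (SP := C * (1 + / a ^ 2 * Zsum (mom2 P))) in *.
  assert (q * C * (1 * 1 + / a ^ 2 * Zsum (mom2 P)) = q * SP) by (unfold SP; ring).
  assert (Sp <= SP) by lra.
  replace ((1 - Sp) / (q - 1)) with ((Sp - 1) * / (1 - q)) by (field; lra).
  replace ((1 - SP) / (q - 1)) with ((SP - 1) * / (1 - q)) by (field; lra).
  apply Rmult_le_compat_r; [apply Rlt_le, Rinv_0_lt_compat; lra | lra].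
Qed.
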